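(* Let $M \in \mathbb{N}$, let $p \in \mathbb{Z}_M^{\times}$, let $q_1, q_2 \in \mathbb{Z}_M$, and let $K, C$ be positive integers with $\gcd(K, M) = 1$. Let $\varphi, \psi : \mathbb{Q} \to \mathbb{Z}$ satisfy $\varphi(x + C) = -\varphi(x)$ and $\psi(x + C) = -\psi(x)$ for all $x \in \frac{C}{K}\mathbb{Z}$ (their values are then reduced modulo $M$). Each grid point $x = \frac{j}{K}$ ($j \in \mathbb{Z}$) is identified with the element $\bar{x} := j \cdot K^{-1} \in \mathbb{Z}_M$. Let $x \mapsto p^x$ be an assignment $\frac{1}{K}\mathbb{Z} \to \mathbb{Z}_M$ satisfying $p^{x+a} = p^x \cdot p^a$ in $\mathbb{Z}_M$ for all $x \in \frac{1}{K}\mathbb{Z}$ and all integers $a \ge 0$. For $x \in \frac{1}{K}\mathbb{Z}$ with $\bar{x} \in \mathbb{Z}_M^{\times}$ define \[ s_M(x) := \big(p^x + q_1 \varphi(Cx) + q_2 \psi(Cx)\big)\cdot \bar{x}^{-1} \in \mathbb{Z}_M . \] Let $t \in \frac{1}{K}\mathbb{Z}$ and nonnegative integers $u, v$ be such that $\bar{t}$, $\overline{t+2v+1}$, $\overline{t+2u}$, $\overline{t+2u+2v+1}$ are units of $\mathbb{Z}_M$, and put $s_0 = s_M(t)$, $s_1 = s_M(t+2v+1)$, $s_2 = s_M(t+2u)$, $s_3 = s_M(t+2u+2v+1)$. Suppose the element $s_2 \cdot \overline{(t + 2u)} + s_3 \cdot \overline{(t + 2u + 2v + 1)}$ is a unit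 in $\mathbb{Z}_M$. Then \[ I_M(t;u,v) := \frac{s_0 \cdot \bar{t} + s_1 \cdot \overline{(t + 2v + 1)}}{s_2 \cdot \overline{(t + 2u)} + s_3 \cdot \overline{(t + 2u + 2v + 1)}} \equiv \frac{1}{p^{2u}} \pmod M. \]
   Context: All arithmetic is in the ring $\mathbb{Z}_M = \mathbb{Z}/M\mathbb{Z}$; $K^{-1}$ is the inverse of $K$ modulo $M$. The oscillators $\varphi,\psi$ are integer-valued and antiperiodic with antiperiod $C$ on the grid $\frac{C}{K}\mathbb{Z}$. *)

(* Defs.v *)
From HB Require Import structures.
From mathcomp Require Import all_boot all_order all_algebra.
Set Implicit Arguments. Unset Strict Implicit. Unset Printing Implicit Defensive.
Import Order.TTheory GRing.Theory Num.Theory.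
Local Open Scope ring_scope.

(* Grid points of (1/K)Z are encoded by an integer j, standing for x = j/K. *)

Definition gbar (M K : nat) (j : int) : 'Z_M := (j%:~R : 'Z_M) / (K%:R : 'Z_M).

Definition Cx (K C : nat) (j : int) : rat := (C%:R : rat) * ((j%:~R : rat) / (K%:R : rat)).

(* s_M(x) = (p^x + q1 phi(Cx) + q2 psi(Cx)) * xbar^{-1};
   pw j stands for p^{j/K}; integer values are reduced modulo M via %:~R. *)
Definition sM (M K C : nat) (q1 q2 : 'Z_M) (phi psi : rat -> int)
    (pw : int -> 'Z_M) (j : int) : 'Z_M :=
  (pw j + q1 * ((phi (Cx K C j))%:~R) + q2 * ((psi (Cx K C j))%:~R)) / gbar M K j.

(* Main.v *)
Require Import Defs.
From HB Require Import structures.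
From mathcomp Require Import all_boot all_order all_algebra.
From mathcomp Require Import ring.
Import Order.TTheory GRing.Theory Num.Theory.
Local Open Scope ring_scope.

Lemma odd_step (K C : nat) (hK : (0 < K)%N) (phi : rat -> int)
  (hphi : forall j : int,
      phi ((C%:R : rat) * (j%:~R / K%:R) + C%:R) = - phi ((C%:R : rat) * (j%:~R / K%:R)))
  (j : int) : phi (Cx K C (j + K%:Z)) = - phi (Cx K C j).
Proof.
rewrite /Cx -hphi; congr phi.
have hK0 : (K%:R : rat) != 0 by rewrite pnatr_eq0 -lt0n.
rewrite intrD mulrDl mulrDr; congr (_ + _).
by rewrite pmulrn divff // mulr1.
Qed.

Lemma odd_iter (K C : nat) (hK : (0 < K)%N) (phi : rat -> int)
  (hphi : forall j : int,
      phi ((C%:R : rat) * (j%:~R / K%:R) + C%:R) = - phi ((C%:R : rat) * (j%:~R / K%:R)))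
  (n : nat) (j : int) : phi (Cx K C (j + (n * K)%N%:Z)) = (-1) ^+ n * phi (Cx K C j).
Proof.
elim: n => [|n IH]; first by rewrite mul0n addr0 expr0 mul1r.
rewrite mulSn PoszD addrA addrAC odd_step // IH exprS.
by rewrite !mulN1r mulNr.
Qed.

Theorem mainTheorem2 (M : nat) (hM : (1 < M)%N) (p q1 q2 : 'Z_M)
  (hp : p \is a GRing.unit) (K C : nat) (hK : (0 < K)%N) (hC : (0 < C)%N)
  (hKM : coprime K M) (phi psi : rat -> int)
  (hphi : forall j : int,
      phi ((C%:R : rat) * (j%:~R / K%:R) + C%:R) = - phi ((C%:R : rat) * (j%:~R / K%:R)))
  (hpsi : forall j : int,
      psi ((C%:R : rat) * (j%:~R / K%:R) + C%:R) = - psi ((C%:R : rat) * (j%:~R / K%:R)))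
  (pw : int -> 'Z_M)
  (hpw : forall (j : int) (a : nat), pw (j + (a * K)%N%:Z) = pw j * p ^+ a)
  (t : int) (u v : nat)
  (h0 : gbar M K t \is a GRing.unit)
  (h1 : gbar M K (t + ((2 * v + 1) * K)%N%:Z) \is a GRing.unit)
  (h2 : gbar M K (t + ((2 * u) * K)%N%:Z) \is a GRing.unit)
  (h3 : gbar M K (t + ((2 * u + 2 * v + 1) * K)%N%:Z) \is a GRing.unit) :
  let s0 := sM K C q1 q2 phi psi pw t in
  let s1 := sM K C q1 q2 phi psi pw (t + ((2 * v + 1) * K)%N%:Z) in
  let s2 := sM K C q1 q2 phi psi pw (t + ((2 * u) * K)%N%:Z) in
  let s3 := sM K C q1 q2 phi psi pw (t + ((2 * u + 2 * v + 1) * K)%N%:Z) in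
  let den := s2 * gbar M K (t + ((2 * u) * K)%N%:Z)
           + s3 * gbar M K (t + ((2 * u + 2 * v + 1) * K)%N%:Z) in
  den \is a GRing.unit ->
  (s0 * gbar M K t + s1 * gbar M K (t + ((2 * v + 1) * K)%N%:Z)) / den
    = (p ^+ (2 * u))^-1.
Proof.
move=> s0 s1 s2 s3 den hden.
rewrite /den /s0 /s1 /s2 /s3 /sM !divrK // in hden *.
have pw3 : pw (t + ((2 * u + 2 * v + 1) * K)%N%:Z)
    = pw (t + ((2 * v + 1) * K)%N%:Z) * p ^+ (2 * u).
  by rewrite -hpw -addrA -PoszD -mulnDl [(2 * v + 1 + _)%N]addnC addnA.
rewrite pw3 hpw in hden *.
have e3 : (t + ((2 * u + 2 * v + 1) * K)%N%:Z)
   = (t + ((2 * u) * K)%N%:Z) + ((2 * v + 1) * K)%N%:Z.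
  by rewrite -addrA -PoszD -mulnDl addnA.
rewrite e3 in hden *.
set t2 := t + ((2 * u) * K)%N%:Z.
have hm : ((-1 : int) ^+ (2 * v + 1)) = -1.
  by rewrite exprD expr1 exprM sqrrN !expr1n mul1r.
rewrite !(@odd_iter K C hK phi hphi) !(@odd_iter K C hK psi hpsi) hm in hden *.
set a := pw t; set b := pw (t + ((2 * v + 1) * K)%N%:Z).
set P := p ^+ (2 * u).
set f := phi (Cx K C t); set g := psi (Cx K C t).
have -> : a + q1 * f%:~R + q2 * g%:~R + (b + q1 * (-1 * f)%:~R + q2 * (-1 * g)%:~R)
   = a + b by rewrite !mulN1r !intrN; ring.
have Ed : forall f2 g2 : int, a * P + q1 * f2%:~R + q2 * g2%:~R + (b * P + q1 * (-1 * f2)%:~R + q2 * (-1 * g2)%:~R)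
   = (a + b) * P.
  by move=> f2 g2; rewrite !mulN1r !intrN; ring.
rewrite Ed in hden *.
have hPu : P \is a GRing.unit by rewrite /P unitrX.
have hab : a + b \is a GRing.unit by move: hden; rewrite unitrM => /andP[].
by rewrite invrM // mulrC -mulrA mulVr // mulr1.
Qed.
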